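(* Let $k\in\mathbb{R}$, $\upsilon$ a multiplier system of weight $k$, and assume $\rho:\Gamma\to GL_d(\mathbb{C})$ is an indecomposable representation such that $\mathcal{H}(k,\rho,\upsilon)\neq\{0\}$. Then $\rho(S^2)=\pm I$, and $$\mathcal{H}(\rho,\upsilon)=\bigoplus_{n\in\mathbb{Z}}\mathcal{H}(k+2n,\rho,\upsilon).$$
   Context: $\Gamma=SL(2,\mathbb{Z})$ acts on the upper half-plane $\mathbb{H}$ by Möbius transformations; $S=\begin{pmatrix}0&-1\\1&0\end{pmatrix}$. Complex powers use the principal branch of $\log$. A multiplier system of weight $k$ is a map $\upsilon:\Gamma\to\{|w|=1\}$ such that $\nu(\gamma,z)=\upsilon(\gamma)(cz+d)^k$ satisfies $\nu(\gamma\sigma,z)=\nu(\gamma,\sigma z)\nu(\sigma,z)$; it is also a multiplier system of weight $k+n$ for every $n\in\mathbb{Z}$. Slash: $(f|_k^\upsilon\gamma)(z)=\upsilon(\gamma)^{-1}(cz+d)^{-k}f(\gamma z)$. Moderate growth: $|f(x+iy)|\le y^N$ for $y>c$. $\mathcal{H}(k,\rho,\upsilon)$: column vectors $F$ of holomorphic moderate-growth functions with $F|_k^\upsilon\gamma=\rho(\gamma)F$ for all $\gamma$; $\mathcal{H}(\rho,\upsilon)=\bigoplus_{n\in\mathbb{Z}}\mathcal{H}(k+n,\rho,\upsilon)$. *)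

(* Defs.v *)
From HB Require Import structures.
From mathcomp Require Import all_boot all_order all_algebra.
From mathcomp Require Import all_classical all_reals all_analysis.
From mathcomp Require Import complex.

Set Implicit Arguments.
Unset Strict Implicit.
Unset Printing Implicit Defensive.
Import Order.TTheory GRing.Theory Num.Theory.
Import numFieldNormedType.Exports.
Local Open Scope ring_scope.
Local Open Scope complex_scope.

Section Defs.
Variable R : realType.
Local Notation C := R[i].

Definition upper (z : C) : Prop := 0 < complex.Im z.

Definition inGamma (g : 'M[int]_2) : Prop := \det g = 1.

Definition ent (g : 'M[int]_2) (i j : 'I_2) : C := (g i j)%:~R.
Definition ga g := ent g ord0 ord0.
Definition gb g := ent g ord0 ord_max.
Definition gc g := ent g ord_max ord0.
Definition gd g := ent g ord_max ord_max.

Definition mob (g : 'M[int]_2) (z : C) : C := (ga g * z + gb g) / (gc g * z + gd g).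
Definition jfac (g : 'M[int]_2) (z : C) : C := gc g * z + gd g.

Definition Smat : 'M[int]_2 :=
  \matrix_(i < 2, j < 2) (if i == j then 0 else if i == ord0 then -1 else 1).

(* principal argument in (-pi, pi] (atan2) *)
Definition parg (w : C) : R :=
  let x := complex.Re w in let y := complex.Im w in
  if 0 < x then atan (y / x)
  else if x < 0 then (if 0 <= y then atan (y / x) + pi else atan (y / x) - pi)
  else if 0 < y then pi / 2 else if y < 0 then - (pi / 2) else 0.

Definition cmod (w : C) : R := Num.sqrt (complex.Re w ^+ 2 + complex.Im w ^+ 2).

(* principal-branch complex power w^s = exp(s Log w), s real, w <> 0 *)
Definition cpow (w : C) (s : R) : C :=
  if w == 0 then 0
  else (powR (cmod w) s)%:C * ((cos (s * parg w)) +i* (sin (s * parg w))).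

Definition multiplier_system (k : R) (v : 'M[int]_2 -> C) : Prop :=
  (forall g, inGamma g -> `|v g| = 1) /\
  (forall g s z, inGamma g -> inGamma s -> upper z ->
     v (g *m s) * cpow (jfac (g *m s) z) k =
     (v g * cpow (jfac g (mob s z)) k) * (v s * cpow (jfac s z) k)).

Definition representation d (rho : 'M[int]_2 -> 'M[C]_d) : Prop :=
  (forall g, inGamma g -> rho g \in unitmx) /\
  (forall g s, inGamma g -> inGamma s -> rho (g *m s) = rho g *m rho s).

(* A subspace of C^d (column vectors) is encoded by the row space of U:
   v in the subspace iff v^T in the row space of U.  Invariance under rho g
   (acting on column vectors) reads (U *m (rho g)^T <= U)%MS. *)
Definition rho_invariant d (rho : 'M[int]_2 -> 'M[C]_d) (U : 'M[C]_d) : Prop :=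
  forall g, inGamma g -> (U *m (rho g)^T <= U)%MS.

Definition indecomposable d (rho : 'M[int]_2 -> 'M[C]_d) : Prop :=
  (0 < d)%N /\
  forall U W : 'M[C]_d, rho_invariant rho U -> rho_invariant rho W ->
    (U + W == (1%:M : 'M[C]_d))%MS -> (U :&: W == (0 : 'M[C]_d))%MS ->
    U = 0 \/ W = 0.

Definition holomorphic_on_H (f : C -> C) : Prop :=
  forall z, upper z -> derivable (f : C^o -> C^o) z 1.

Definition moderate_growth (f : C -> C) : Prop :=
  exists (N : nat) (c : R), forall x y : R, c < y -> cmod (f (x +i* y)) <= y ^+ N.

Definition slash d (k : R) (v : 'M[int]_2 -> C) (F : C -> 'cV[C]_d)
  (g : 'M[int]_2) (z : C) : 'cV[C]_d :=
  ((v g)^-1 * cpow (jfac g z) (- k)) *: F (mob g z).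

Definition inH d (k : R) (rho : 'M[int]_2 -> 'M[C]_d) (v : 'M[int]_2 -> C)
  (F : C -> 'cV[C]_d) : Prop :=
  (forall i : 'I_d, holomorphic_on_H (fun z => F z i ord0)) /\
  (forall i : 'I_d, moderate_growth (fun z => F z i ord0)) /\
  (forall g z, inGamma g -> upper z -> slash k v F g z = rho g *m F z).

(* F is the zero element (functions are considered on the upper half-plane) *)
Definition zero_on_H d (F : C -> 'cV[C]_d) : Prop := forall z, upper z -> F z = 0.

End Defs.

(* Main.v *)
Require Import Defs.
From HB Require Import structures.
From mathcomp Require Import all_boot all_order all_algebra.
From mathcomp Require Import all_classical all_reals all_analysis.
From mathcomp Require Import complex.
Import Order.TTheory GRing.Theory Num.Theory.
Local Open Scope ring_scope.
Local Open Scope complex_scope.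

Lemma two_neq0 (R : realType) : (2 : R[i]) != 0.
Proof. by rewrite pnatr_eq0. Qed.

Lemma inGamma1 : inGamma 1. Proof. by rewrite /inGamma det1. Qed.
Lemma inGammaN1 : inGamma (-1). Proof. by rewrite /inGamma -scaleN1r detZ det1 mulr1 expr2 mulrNN mulr1. Qed.

Lemma SS : Smat *m Smat = -1.
Proof.
apply/matrixP => i j; rewrite !mxE big_ord_recr big_ord_recr big_ord0 /= !mxE.
by case: i => [[|[|i]] Hi] //; case: j => [[|[|j]] Hj].
Qed.

Lemma auxA (F : fieldType) d (B : 'M[F]_d) : B - 1%:M + (1%:M - B) = 0.
Proof. by rewrite addrA subrK subrr. Qed.
Lemma auxB (F : fieldType) d (B : 'M[F]_d) : B + 1%:M - (1%:M + B) = 0.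
Proof. by rewrite [1%:M + B]addrC subrr. Qed.

Lemma aux2 (F : fieldType) d (B : 'M[F]_d) : (2:F) != 0 ->
  1%:M = 2^-1 *: ((1%:M + B) + (1%:M - B)).
Proof. move=> h. by rewrite addrACA subrr addr0 -mulr2n -scaler_nat scalerA mulVf // scale1r. Qed.
Lemma aux3 (F : fieldType) d (B X : 'M[F]_d) : (2:F) != 0 ->
  X *m (B - 1%:M) = 0 -> X *m (B + 1%:M) = 0 -> X = 0.
Proof. move=> h XU XW.
have : X *m ((B + 1%:M) - (B - 1%:M)) = 0 by rewrite mulmxBr XU XW subr0.
rewrite opprB [1%:M - B]addrC addrACA subrr add0r mulmxDr mulmx1 -mulr2n -scaler_nat.
by move/eqP; rewrite scaler_eq0 (negbTE h) /= => /eqP.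
Qed.

Lemma rho_pm (R : realType) d (rho : 'M[int]_2 -> 'M[R[i]]_d) :
  representation rho -> indecomposable rho ->
  rho (-1) = 1%:M \/ rho (-1) = - 1%:M.
Proof.
move=> [Hu Hm] [_ Hind].
have r1 : rho 1 = 1%:M.
  have h := Hm _ _ inGamma1 inGamma1; rewrite mul1mx in h.
  by rewrite -[LHS](mulKmx (Hu _ inGamma1)) -h (mulVmx (Hu _ inGamma1)).
set A := rho (-1).
have AA : A *m A = 1%:M.
  rewrite /A -Hm; [|exact: inGammaN1|exact: inGammaN1].
  by rewrite mulmxN mulmx1 opprK.
have comm : forall g, inGamma g -> rho g *m A = A *m rho g.
  move=> g Hg; rewrite /A -(Hm _ _ Hg inGammaN1) -(Hm _ _ inGammaN1 Hg).
  by rewrite mulmxN mulmx1 mulNmx mul1mx.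
set B := A^T.
have BB : B *m B = 1%:M by rewrite /B -trmx_mul AA trmx1.
set U := kermx (B - 1%:M)%R. set W := kermx (B + 1%:M)%R.
have cm : forall g, inGamma g -> (rho g)^T *m B = B *m (rho g)^T.
  by move=> g Hg; rewrite /B -!trmx_mul comm.
have invK : forall E, (forall g, inGamma g -> (rho g)^T *m E = E *m (rho g)^T) ->
    rho_invariant rho (kermx E).
  move=> E HE g Hg; apply/sub_kermxP.
  by rewrite -mulmxA HE // mulmxA mulmx_ker mul0mx.
have invU : rho_invariant rho U.
  by apply: invK => g Hg; rewrite mulmxBr mulmxBl cm // mulmx1 mul1mx.
have invW : rho_invariant rho W.
  by apply: invK => g Hg; rewrite mulmxDr mulmxDl cm // mulmx1 mul1mx.
have PU : ((1%:M + B)%R <= U)%MS.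
  apply/sub_kermxP; rewrite mulmxDl mul1mx mulmxBr BB mulmx1.
  exact: auxA.
have PW : ((1%:M - B)%R <= W)%MS.
  apply/sub_kermxP; rewrite mulmxBl mul1mx mulmxDr BB mulmx1.
  exact: auxB.
have hsum : (U + W == 1%:M)%MS.
  apply/andP; split; first exact: submx1.
  have h2 := addmx_sub_adds PU PW.
  rewrite (@aux2 _ _ B (two_neq0 R)).
  exact: scalemx_sub.
have hcap : (U :&: W == (0 : 'M[R[i]]_d))%MS.
  set X := (U :&: W)%MS.
  have XU : X *m (B - 1%:M) = 0 by apply/sub_kermxP; exact: capmxSl.
  have XW : X *m (B + 1%:M) = 0 by apply/sub_kermxP; exact: capmxSr.
  have X0 : X = 0 by apply: (@aux3 _ _ _ _ (two_neq0 R) XU XW).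
  by rewrite X0 /eqmx submx_refl.
case: (Hind U W invU invW hsum hcap) => [U0|W0].
- right; move: PU; rewrite U0 submx0 => /eqP h.
  have hB : B = - 1%:M by apply/eqP; rewrite -subr_eq0 opprK addrC h.
  by rewrite -[A]trmxK -/B hB raddfN /= trmx1.
- left; move: PW; rewrite W0 submx0 => /eqP h.
  have hB : B = 1%:M by apply/eqP; rewrite -subr_eq0 -opprB h oppr0.
  by rewrite -[A]trmxK -/B hB trmx1.
Qed.


Lemma cpowN1 (R : realType) (t : R) : cpow (-1) t = (cos (t * pi)) +i* (sin (t * pi)).
Proof.
rewrite /cpow oppr_eq0 oner_eq0 /=.
have -> : cmod (-1 : R[i]) = 1.
  by rewrite /cmod /= oppr0 sqrrN expr1n expr2 mul0r addr0 sqrtr1.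
have -> : parg (-1 : R[i]) = pi.
  rewrite /parg /= oppr0 mul0r atan0 add0r ltrN10 lexx.
  by have -> : (0 < -1 :> R) = false by apply/negbTE; rewrite -leNgt ltW // ltrN10.
rewrite powR1. by rewrite mul1r.
Qed.

Lemma jfacN1 (R : realType) (z : R[i]) : jfac (-1) z = -1.
Proof. rewrite /jfac /gc /gd /ent !mxE /=. by rewrite ?oppr0 ?mulrNz ?mulr1z ?mulr0z ?mul0r ?add0r ?addr0 ?mulN1r ?invrN ?invr1 ?mulrN ?mulr1 ?opprK. Qed.
Lemma mobN1 (R : realType) (z : R[i]) : mob (-1) z = z.
Proof. rewrite /mob /ga /gb /gc /gd /ent !mxE /=. by rewrite ?oppr0 ?mulrNz ?mulr1z ?mulr0z ?mul0r ?add0r ?addr0 ?mulN1r ?invrN ?invr1 ?mulrN ?mulr1 ?opprK. Qed.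

From mathcomp Require Import ring.
Lemma periodicz (R : realType) (f : R -> R) (T : R) : periodic f T ->
  forall (m : int) a, f (a + T *~ m) = f a.
Proof.
move=> h [p|p] a; first exact: periodicn.
rewrite NegzE mulrNz.
by rewrite -[in RHS](subrK (T *~ p.+1) a) periodicn.
Qed.

Lemma cpow_shift (R : realType) (k : R) (n : int) :
  cpow (-1) (-(k + (2*n+1)%:~R)) = - cpow (-1) (-k).
Proof.
rewrite !cpowN1.
have e : -(k + (2*n+1)%:~R) * pi = -k*pi + (pi *+ 2) *~ (-n-1) + pi.
  rewrite -mulrzr. ring.
rewrite e cosDpi sinDpi (@periodicz R _ _ (@cosD2pi R)) (@periodicz R _ _ (@sinD2pi R)).
by apply/eqP; rewrite eq_complex /= !eqxx.
Qed.

Lemma sc_eq (F : fieldType) m n (c e : F) (x : 'M[F]_(m,n)) :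
  x != 0 -> c *: x = e *: x -> c = e.
Proof.
move=> hx /eqP; rewrite -subr_eq0 -scalerBl scaler_eq0 (negbTE hx) orbF subr_eq0.
by move/eqP.
Qed.

Lemma neg_self (R : realType) m n (y : 'M[R[i]]_(m,n)) : y = - y -> y = 0.
Proof.
move=> h; apply/eqP.
have : y *+ 2 = 0 by rewrite mulr2n {1}h addNr.
by move/eqP; rewrite -scaler_nat scaler_eq0 (negbTE (two_neq0 R)).
Qed.

Theorem lemma2p15 (R : realType) (k : R) (v : 'M[int]_2 -> R[i]) (d : nat)
  (rho : 'M[int]_2 -> 'M[R[i]]_d) :
  multiplier_system k v ->
  representation rho ->
  indecomposable rho ->
  (exists F : R[i] -> 'cV[R[i]]_d, inH k rho v F /\ ~ zero_on_H F) ->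
  (rho (Smat *m Smat) = 1%:M \/ rho (Smat *m Smat) = - 1%:M) /\
  (forall (n : int) (F : R[i] -> 'cV[R[i]]_d),
     inH (k + (2 * n + 1)%:~R) rho v F -> zero_on_H F).
Proof.
move=> Hv Hrep Hind [F0 [HF0 nz]].
have Hpm := @rho_pm R d rho Hrep Hind.
rewrite SS; split; first exact: Hpm.
have key : forall s F, inH s rho v F -> forall z, upper z ->
    ((v (-1))^-1 * cpow (-1) (-s)) *: F z = rho (-1) *m F z.
  move=> s F [_ [_ HF]] z Hz; have := HF (-1) z inGammaN1 Hz.
  by rewrite /slash jfacN1 mobN1.
have [z0 [Hz0 Fz0]] : exists z, upper z /\ F0 z != 0.
  case: (pselect (exists z, upper z /\ F0 z != 0)) => [//|H].
  exfalso; apply: nz => z Hz; apply/eqP; apply/negPn/negP => hn.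
  by apply: H; exists z.
have h0 := key _ _ HF0 z0 Hz0.
move=> n G HG z Hz.
have h1 := key _ _ HG z Hz.
rewrite cpow_shift mulrN scaleNr in h1.
case: Hpm => H1.
- rewrite H1 mul1mx -{2}[F0 z0]scale1r in h0.
  have hc := @sc_eq _ _ _ _ _ _ Fz0 h0.
  rewrite H1 mul1mx hc scale1r in h1.
  by apply: (@neg_self R); rewrite -[LHS]opprK h1.
- rewrite H1 mulNmx mul1mx -[RHS]scaleN1r in h0.
  have hc := @sc_eq _ _ _ _ _ _ Fz0 h0.
  rewrite H1 mulNmx mul1mx hc scaleN1r opprK in h1.
  exact: (@neg_self R).
Qed.
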